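(* Let $\Sigma$ be an alphabet with $|\Sigma|=1$ and let $L\subseteq\Sigma^*$ be a language satisfying the Pumping Lemma for context-free languages, i.e. the property $\mathit{PL}(L)$ below holds. Then $L$ is a regular language. Here $\mathit{PL}(L)$ is the property: there exists $n>0$ such that for every $z\in L$ with $|z|\ge n$ there exist $u,v,w,x,y\in\Sigma^*$ such that (1) $z=uvwxy$, (2) $vx\neq\varepsilon$, (3) $|vwx|\le n$, and (4) for all $i\ge 0$, $u v^i w x^i y\in L$.
   Context: For a word $w$, $|w|$ denotes its length, $w^0=\varepsilon$ is the empty word and $w^{i+1}=w^i w$. No assumption is made that $L$ is context-free; only the property $\mathit{PL}(L)$ is assumed. *)

(* Defs.v *)
From mathcomp Require Import all_boot.
Set Implicit Arguments. Unset Strict Implicit. Unset Printing Implicit Defensive.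

(* Words over an alphabet Sigma are sequences [seq Sigma]; a language is an
   arbitrary predicate (not necessarily decidable) on words. *)

Fixpoint wpow (Sigma : Type) (w : seq Sigma) (i : nat) : seq Sigma :=
  match i with
  | 0 => [::]
  | i'.+1 => wpow w i' ++ w
  end.

Definition PL (Sigma : Type) (L : seq Sigma -> Prop) : Prop :=
  exists n : nat, 0 < n /\
    forall z : seq Sigma, L z -> n <= size z ->
      exists u v w x y : seq Sigma,
        [/\ z = u ++ v ++ w ++ x ++ y,
            v ++ x <> [::],
            size (v ++ w ++ x) <= n &
            forall i : nat, L (u ++ wpow v i ++ w ++ wpow x i ++ y)].

Record dfa (Sigma : finType) := DFA {
  dfa_state : finType;
  dfa_start : dfa_state;
  dfa_trans : dfa_state -> Sigma -> dfa_state;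
  dfa_final : pred dfa_state }.

Arguments dfa_start {Sigma} _.
Arguments dfa_trans {Sigma} _ _ _.
Arguments dfa_final {Sigma} _ _.

Definition dfa_accepts (Sigma : finType) (A : dfa Sigma) (w : seq Sigma) : bool :=
  dfa_final A (foldl (dfa_trans A) (dfa_start A) w).

Definition regular (Sigma : finType) (L : seq Sigma -> Prop) : Prop :=
  exists A : dfa Sigma, forall w : seq Sigma, L w <-> dfa_accepts A w.

(* Main.v *)
Require Import Defs.
From mathcomp Require Import all_boot.
From mathcomp Require Import zify.
From Stdlib Require Import Classical ClassicalDescription.
Set Implicit Arguments.

Lemma iterP (S : nat -> Prop) n P (Hcl : forall k, n <= k -> S k -> S (k + P)) :
  forall j k, n <= k -> S k -> S (k + j * P).
Proof.
elim=> [|j IH] k hk hs; first by rewrite mul0n addn0.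
rewrite mulSn addnA; apply: IH; first lia.
exact: Hcl.
Qed.

Lemma periodic (S : nat -> Prop) n P (HP : 0 < P)
  (Hcl : forall k, n <= k -> S k -> S (k + P)) :
  exists M, forall k, M <= k -> (S k <-> S (k + P)).
Proof.
have Q : forall k0, exists N, forall j, N <= j ->
    (S (k0 + j * P) <-> S (k0 + j.+1 * P)).
  move=> k0; case: (classic (exists j, n <= k0 + j * P /\ S (k0 + j * P))).
  - case=> j [h1 h2].
    have all : forall j', j <= j' -> S (k0 + j' * P).
      move=> j' hj; have -> : k0 + j' * P = k0 + j * P + (j' - j) * P.
        by rewrite -addnA -mulnDl subnKC.
      exact: (@iterP _ _ _ Hcl).
    exists j => j' hj; split=> _; apply: all; lia.
  - move=> hno; exists n => j hj; split=> hs; exfalso; apply: hno.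
    + exists j; split=> //; have : j <= j * P by rewrite leq_pmulr.
      lia.
    + exists j.+1; split=> //; have : j.+1 <= j.+1 * P by rewrite leq_pmulr.
      lia.
have Q2 : forall m, exists N, forall k0 j, k0 < m -> N <= j ->
    (S (k0 + j * P) <-> S (k0 + j.+1 * P)).
  elim=> [|m [N IH]]; first by exists 0.
  have [N' HN'] := Q m.
  exists (maxn N N') => k0 j hk hj.
  case: (ltnP k0 m) => h.
    apply: IH => //; lia.
  have -> : k0 = m by lia.
  apply: HN'; lia.
have [N HN] := Q2 P.
exists (N * P) => k hk.
have hj : N <= k %/ P.
  by rewrite -(mulnK N HP); apply: leq_div2r.
have := HN (k %% P) (k %/ P) (ltn_pmod k HP) hj.
rewrite mulSn.
have e := divn_eq k P.
have -> : k %% P + k %/ P * P = k by lia.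
by have -> : k %% P + (P + k %/ P * P) = k + P by lia.
Qed.

Lemma iter2 (S : nat -> Prop) M P
  (HM : forall k, M <= k -> (S k <-> S (k + P))) :
  forall j a, M <= a -> (S (a + j * P) <-> S a).
Proof.
elim=> [|j IH] a ha; first by rewrite mul0n addn0.
rewrite mulSnr addnA -HM; [exact: IH | lia].
Qed.

Fixpoint wpow_size (Sigma : Type) (v : seq Sigma) i : size (wpow v i) = i * size v.
Proof. case: i => [|i] //=. by rewrite size_cat wpow_size mulSnr. Qed.

Theorem theorem1 (Sigma : finType) (L : seq Sigma -> Prop)
  (hSigma : #|Sigma| = 1) (hPL : PL L) : regular L.
Proof.
have [a _] : exists a : Sigma, true.
  have : 0 < #|Sigma| by rewrite hSigma.
  by case/card_gt0P => a _; exists a.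
have uniq1 : forall x : Sigma, x = a.
  move=> x; have : #|Sigma| <= 1 by rewrite hSigma.
  move/card_le1_eqP => h; exact: h.
have wordE : forall z : seq Sigma, z = nseq (size z) a.
  by elim=> [|b z IH] //=; rewrite -IH (uniq1 b).
pose S k := L (nseq k a).
have LS : forall z, L z <-> S (size z) by move=> z; rewrite /S -wordE.
case: hPL => n [n0 hn].
have Hcl : forall k, n <= k -> S k -> S (k + n`!).
  move=> k hk hs.
  have [u [v [w [x [y [ez nvx hsz hi]]]]]] := hn _ hs ltac:(by rewrite size_nseq).
  have hk' : k = size u + size v + size w + size x + size y.
    by rewrite -(size_nseq k a) -/(nseq k a) ez !size_cat; lia.
  move: nvx hsz; rewrite !size_cat => nvx hsz.
  have p0 : 0 < size v + size x.
    rewrite lt0n; apply/negP => /eqP; rewrite -size_cat => /eqP.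
    by rewrite size_eq0 => /eqP.
  set p := size v + size x in p0.
  have allj : forall j, S (k + j * p).
    move=> j; have := hi j.+1; rewrite LS.
    have e : forall a b, a = b -> S a -> S b by move=> ? ? ->.
    apply: e; rewrite !size_cat !wpow_size /p hk'; nia.
  have hd : p %| n`! by apply: dvdn_fact; rewrite p0 /p; lia.
  by rewrite -(divnK hd).
have [M HM] := @periodic _ _ _ (fact_gt0 n) Hcl.
set P := n`! in HM.
have P0 : 0 < P := fact_gt0 n.
pose step (s : 'I_(M + P).+1) (_ : Sigma) : 'I_(M + P).+1 :=
  inord (if s.+1 < M + P then s.+1 else M).
pose fin (s : 'I_(M + P).+1) : bool :=
  if excluded_middle_informative (S s) then true else false.
exists (DFA ord0 step fin) => z.
rewrite /dfa_accepts /=.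
have inv : forall z : seq Sigma, let v := nat_of_ord (foldl step ord0 z) in
  v < M + P /\ exists j, size z = v + j * P /\ (0 < j -> M <= v).
  move=> {}z; elim/last_ind: z => [|z b IH] /=.
    by split; [lia | exists 0].
  rewrite foldl_rcons size_rcons.
  move: IH; set s := foldl step ord0 z => -[hv [j [hj hM]]].
  rewrite /step; case: ifP => h.
    rewrite !inordK; last lia.
    split=> //; exists j; split; [lia | move=> /hM; lia].
  rewrite !inordK; last lia.
  split; first lia.
  exists j.+1; split; last by [].
  rewrite mulSnr; move/negbT: h; rewrite -leqNgt => h; lia.
have [_ [j [hj hM]]] := inv z.
rewrite LS hj /fin.
case: excluded_middle_informative => hs.
  split=> // _; case: j hj hM => [|j] hj hM; first by rewrite mul0n addn0.
  by apply/(@iter2 _ _ _ HM) => //; apply: hM.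
split=> // hs'; exfalso; apply: hs.
case: j hj hM hs' => [|j] hj hM hs'; first by move: hs'; rewrite mul0n addn0.
by apply: (proj1 (@iter2 _ _ _ HM j.+1 _ (hM isT))) hs'.
Qed.
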